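(* Let $(M,(I,O))$ be a left-connected oriented map and $A=(H,\tau,\alpha)=\Lambda_1(M,(I,O))$. Then $A$ is a plane tree, and $(I,O)$ is the root-to-leaves orientation of $A$ (every non-root vertex of $A$ is incident to exactly one half-edge of $I$).
   Context: Permutations compose right to left. A map is $M=(H,\sigma,\alpha)$, $H$ finite, $\alpha$ a fixed-point-free involution, $\sigma$ a permutation, $\langle\sigma,\alpha\rangle$ transitive, root $r\in H$; vertices, edges, faces are cycles of $\sigma,\alpha,\phi=\sigma\alpha$; genus via $v-e+f=2-2g$; a plane tree is a map with one face and genus $0$. For a permutation $\pi$ and a subset $S$, $\pi_{|S}$ is obtained from the cycles of $\pi$ by erasing elements not in $S$. An orientation is a partition $H=I\uplus O$ with $\alpha(I)=O$. A left-path is a sequence $h_1,\dots,h_k\in I$ such that with $h_0=r$, for each $j$ there is $q_j>0$ with $h_{j-1}=\sigma^{q_j}(\alpha(h_j))$ and $\sigma^p(\alpha(h_j))\in O$ for $0\le p<q_j$; $(M,(I,O))$ is left-connected if every element of $I$ ends some left-path. Unfolding: take new elements $i,o\notin H$, $H'=H\cup\{i,o\}$, $I'=I\cup\{i\}$, $O'=O\cup\{o\}$, $\alpha'$ extending $\alpha$ with $\alpha'(i)=o$. $\sigma'$ is obtained from $\sigma$ by inserting $i$ just before $r$ in its cycle ($\sigma'(\sigma^{-1}(r))=i$, $\sigma'(i)=r$) and $\sigma'(o)=o$. $\pi_\circ=\sigma'_{|I'}$ regarded as a permutation of $H'$ fixing $O'$; $\tau'=\sigma'\pi_\circ^{-1}$;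 $\tau=\tau'_{|H}$. Then $\Lambda_1(M,(I,O))=(H,\tau,\alpha)$ with root $\tau'(i)$. *)

(* Defs.v *)
From mathcomp Require Import all_boot all_order all_algebra perm.
Set Implicit Arguments. Unset Strict Implicit. Unset Printing Implicit Defensive.
Import GRing.Theory.

(* Maps are given by permutations (here: functions, asserted bijective where
   needed) on a finite set H of half-edges.  Composition is right to left:
   phi = sigma alpha  means  phi x = sigma (alpha x). *)

Section Maps.
Variable H : finType.

Definition transitive_pair (s a : H -> H) : Prop :=
  forall x y, connect (fun u v => (v == s u) || (v == a u)) x y.

Definition is_map (s a : H -> H) : Prop :=
  [/\ injective s, involutive a, (forall x, a x != x) & transitive_pair s a].

Definition ncycles (f : H -> H) : nat := fcard f H.

Definition nvertices (s a : H -> H) := ncycles s.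
Definition nedges (s a : H -> H) := ncycles a.
Definition nfaces (s a : H -> H) := ncycles (s \o a).

(* v - e + f, so that v - e + f = 2 - 2g *)
Definition euler_char (s a : H -> H) : int :=
  (Posz (nvertices s a) - Posz (nedges s a) + Posz (nfaces s a))%R.

Definition plane_tree (s a : H -> H) : Prop :=
  [/\ is_map s a, nfaces s a = 1%N & euler_char s a = Posz 2].

(* orientation H = I (+) O with O = ~: I and alpha(I) = O *)
Definition orientation (a : H -> H) (I : {set H}) : Prop :=
  a @: I = ~: I.

(* one step of a left-path: h_{j-1} = prev, h_j = h *)
Definition left_step (s a : H -> H) (I : {set H}) (prev h : H) : Prop :=
  h \in I /\
  exists q, [/\ (0 < q)%N, prev = iter q s (a h) &
                forall p, (p < q)%N -> iter p s (a h) \in ~: I].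

(* h_1 .. h_k is a left-path starting from h_0 = prev *)
Fixpoint left_path (s a : H -> H) (I : {set H}) (prev : H) (l : seq H) : Prop :=
  match l with
  | [::] => True
  | h :: l' => left_step s a I prev h /\ left_path s a I h l'
  end.

Definition left_connected (s a : H -> H) (I : {set H}) (r : H) : Prop :=
  forall h, h \in I ->
    exists l : seq H, [/\ l != [::], left_path s a I r l & last r l = h].

End Maps.

(* restriction pi_{|S}: for x in S, the first element of S after x on the
   cycle of pi through x; the identity outside S *)
Definition restr (T : finType) (p : T -> T) (S : {set T}) (x : T) : T :=
  if x \in S then
    nth x [seq y <- [seq iter k.+1 p x | k <- iota 0 #|T|] | y \in S] 0
  else x.

(* Unfolding.  H' = H + bool, with i = inr true and o = inr false. *)
Section Unfold.
Variables (H : finType) (s a : H -> H) (I : {set H}) (r : H).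

Definition HH := (H + bool)%type.
Definition ih : HH := inr true.
Definition oh : HH := inr false.

Definition sigma' (z : HH) : HH :=
  match z with
  | inl h => if s h == r then ih else inl (s h)
  | inr true => inl r
  | inr false => oh
  end.

Definition I' : {set HH} :=
  [set z : HH | match z with inl h => h \in I | inr b => b end].

Definition Hset : {set HH} := [set z : HH | if z is inl _ then true else false].

Definition pi_circ : HH -> HH := restr sigma' I'.

Definition tau' (z : HH) : HH := sigma' (finv pi_circ z).

Definition tau (h : H) : H :=
  match restr tau' Hset (inl h) with inl y => y | inr _ => h end.

(* root of Lambda_1: tau'(i)  (it lies in H; the fallback r is never used) *)
Definition unfold_root : H :=
  match tau' ih with inl y => y | inr _ => r end.

End Unfold.

(* Main.v *)
Require Import Defs.
From mathcomp Require Import all_boot all_order all_algebra perm.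
Set Implicit Arguments. Unset Strict Implicit. Unset Printing Implicit Defensive.
Import GRing.Theory.


Section Gen.
Variable T : finType.
Implicit Types (p : T -> T) (S : {set T}).

Definition fh p S z k := iter k p z \in S /\ forall j, j < k -> iter j p z \notin S.

Definition firstin p S (d z : T) :=
  nth d [seq y <- [seq iter k p z | k <- iota 0 #|T|] | y \in S] 0.

Lemma nth_filter_first (A : eqType) (a : pred A) s k (d d' : A) :
  k < size s -> a (nth d s k) -> (forall j, j < k -> ~~ a (nth d s j)) ->
  nth d' (filter a s) 0 = nth d s k.
Proof.
elim: s k => [|x s IH] [|k] //=.
- by move=> _ ->.
- move=> lt ak hj; have := hj 0 (ltn0Sn _); rewrite /= => /negbTE ->.
  apply: IH => // j jk; exact: (hj j.+1).
Qed.

Lemma order_le p z : order p z <= #|T|.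
Proof. exact: max_card. Qed.

Lemma fh_lt p S z k : injective p -> fh p S z k -> k < #|T|.
Proof.
move=> ip [kS hj]; apply: leq_trans (order_le p z).
rewrite ltnNge; apply/negP => ok.
have: iter (k - order p z) p z \in S.
  by rewrite -{2}(iter_order ip z) -iterD subnK.
by apply/negP; apply: hj; rewrite ltn_subrL order_gt0 (leq_trans (order_gt0 p z) ok).
Qed.

Lemma firstin_fh p S d z k : injective p -> fh p S z k -> firstin p S d z = iter k p z.
Proof.
move=> ip h; have kl := fh_lt ip h; case: h => kS hj.
rewrite /firstin (nth_filter_first (k := k) (d := d)) ?size_map ?size_iota //;
  rewrite ?(nth_map 0) ?size_iota ?nth_iota //.
by move=> j jk; rewrite (nth_map 0) ?size_iota ?nth_iota ?(ltn_trans jk) //; apply: hj.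
Qed.

Lemma fh_exists p S z : (exists k, iter k p z \in S) -> exists k, fh p S z k.
Proof.
move=> ex; have ex' : exists k, iter k p z \in S by [].
case: (ex_minnP ex') => m mS mmin; exists m; split=> // j jm.
by apply/negP => jS; have := mmin j jS; rewrite leqNgt jm.
Qed.

Lemma fh_unique p S z k l : fh p S z k -> fh p S z l -> k = l.
Proof.
move=> [kS hk] [lS hl]; case: (ltngtP k l) => // c.
- by have := hl _ c; rewrite kS.
- by have := hk _ c; rewrite lS.
Qed.

Lemma restrE p S x : x \in S -> restr p S x = firstin p S x (p x).
Proof.
move=> xS; rewrite /restr xS /firstin; congr (nth _ (filter _ _) _).
by apply: eq_map => k; rewrite iterSr.
Qed.

Lemma restr_out p S x : x \notin S -> restr p S x = x.
Proof. by rewrite /restr => /negbTE ->. Qed.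

Lemma restr_fh p S x : injective p -> x \in S ->
  exists k, fh p S (p x) k /\ restr p S x = iter k p (p x).
Proof.
move=> ip xS.
have [k hk] : exists k, fh p S (p x) k.
  apply: fh_exists; exists (order p x).-1.
  by rewrite -iterSr orderSpred iter_order.
by exists k; split => //; rewrite restrE // (firstin_fh _ ip hk).
Qed.

Lemma restr_in p S x : injective p -> x \in S -> restr p S x \in S.
Proof. by move=> ip xS; case: (restr_fh ip xS) => k [[kS _] ->]. Qed.

Lemma iter_inj p n : injective p -> injective (iter n p).
Proof. by move=> ip; elim: n => //= n IH x y /ip /IH. Qed.

Lemma restr_inj p S : injective p -> injective (restr p S).
Proof.
move=> ip.
have key : forall x y, x \in S -> y \in S -> restr p S x = restr p S y ->
   forall k l, fh p S (p x) k -> restr p S x = iter k p (p x) ->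
   fh p S (p y) l -> restr p S y = iter l p (p y) -> k <= l -> x = y.
  move=> x y xS yS e k l hk ek hl el kl.
  move: e; rewrite ek el -(subnKC kl) iterD => /(iter_inj ip).
  rewrite -iterSr iterS => /ip ex.
  case E: (l - k) ex => [|m] //= ex.
  exfalso; case: hl => _ /(_ m); rewrite -iterSr /= -ex xS => H; suff: m < l by move/H.
  by apply: leq_trans (leq_subr k l); rewrite E.
move=> x y e; case xS: (x \in S); case yS: (y \in S).
- have [k [hk ek]] := restr_fh ip xS; have [l [hl el]] := restr_fh ip yS.
  case: (leqP k l) => kl; first exact: (key x y xS yS e k l).
  symmetry; apply: (key y x yS xS (esym e) l k) => //; exact: ltnW.
- by have := restr_in ip xS; rewrite e restr_out ?yS.
- by have := restr_in ip yS; rewrite -e restr_out ?xS.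
- by move: e; rewrite !restr_out ?xS ?yS.
Qed.
End Gen.

Lemma ncomp_reps (T : finType) (f : T -> T) (R : {set T}) :
  injective f ->
  (forall x, exists2 r, r \in R & fconnect f x r) ->
  {in R &, forall r1 r2, fconnect f r1 r2 -> r1 = r2} ->
  ncycles f = #|R|.
Proof.
move=> fi cov un; rewrite /ncycles.
have sym : connect_sym (frel f) by move=> x y; exact: fconnect_sym.
rewrite -(card_in_imset (f := froot f)); last first.
  move=> r1 r2 r1R r2R /(fingraph.rootP sym) c; exact: un.
rewrite /n_comp_mem; apply: eq_card => x; rewrite !inE.
apply/idP/imsetP.
- case/andP => /eqP rx _; have [r rR xr] := cov x.
  by exists r => //; rewrite -rx; apply/(fingraph.rootP sym).
- case=> r rR ->; rewrite andbT; exact: roots_root.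
Qed.


Section Spec.
Variables (H : finType) (sigma alpha : {perm H}) (r : H) (I : {set H}).

Local Notation sg := (sigma' sigma r).
Local Notation I2 := (I' I).
Local Notation pic := (pi_circ sigma I r).
Local Notation tp := (tau' sigma I r).
Local Notation tu := (tau sigma I r).
Local Notation iH := (@ih H).
Local Notation oH := (@oh H).
Local Notation inH x := (@inl H bool x : HH H).

Lemma inI2 x : (inH x \in I2) = (x \in I).
Proof. by rewrite inE. Qed.
Lemma ih_I2 : iH \in I2. Proof. by rewrite inE. Qed.
Lemma oh_I2 : oH \notin I2. Proof. by rewrite inE. Qed.

Lemma sgE x : sg (inH x) = if sigma x == r then iH else inH (sigma x).
Proof. by []. Qed.

Lemma sg_inj : injective sg.
Proof.
move=> [x|[]] [y|[]] //=; rewrite ?sgE /ih /oh;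
  do ?[case: ifP => // /eqP]; try congruence.
- by move=> e1 e2 _; congr inl; apply: (perm_inj (s := sigma)); rewrite e1 e2.
- by move=> _ _ [] /perm_inj ->.
Qed.


Lemma sg_eq_oh z : sg z = oH -> z = oH.
Proof. by case: z => [x|[]] //=; case: ifP. Qed.

Lemma iter_sg_noh x j : iter j sg (inH x) != oH.
Proof.
elim: j => [|j IH] //=; apply/eqP => /sg_eq_oh e; by rewrite e eqxx in IH.
Qed.

Lemma pic_inj : injective pic.
Proof. exact: (@restr_inj _ _ I2 sg_inj). Qed.

Lemma tp_inj : injective tp.
Proof. move=> x y /sg_inj; exact: (finv_inj pic_inj). Qed.

Lemma tp_out z : z \notin I2 -> tp z = sg z.
Proof.
move=> zI; rewrite /tau'; congr sg.
have e : pic z = z by rewrite /pi_circ restr_out.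
by rewrite -{1}e (finv_f pic_inj).
Qed.

Lemma tp_oh : tp oH = oH.
Proof. by rewrite tp_out ?oh_I2. Qed.

Lemma tp_in z : z \in I2 -> exists k, fh sg I2 (tp z) k /\ iter k sg (tp z) = z.
Proof.
move=> zI; set w := finv pic z.
have pw : pic w = z by rewrite /w (f_finv pic_inj).
have wI : w \in I2.
  by apply/negPn/negP => wn; move: zI; rewrite -pw /pi_circ restr_out // (negbTE wn).
have [k [hk ek]] := @restr_fh _ _ I2 _ sg_inj wI.
by exists k; split; rewrite /tau' -/w //; rewrite -ek.
Qed.

Definition ownw z := firstin sg I2 oH z.
Definition hits z := exists k, iter k sg z \in I2.

Lemma ownw_fh z k : fh sg I2 z k -> ownw z = iter k sg z.
Proof. by move=> h; rewrite /ownw (firstin_fh oH sg_inj h). Qed.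

Lemma ownw_in z : hits z -> ownw z \in I2.
Proof. by case/fh_exists => k hk; rewrite (ownw_fh hk); case: hk. Qed.

Lemma ownw_I2 z : z \in I2 -> ownw z = z.
Proof. by move=> zI; rewrite (@ownw_fh z 0). Qed.

Lemma tp_hits z : hits z -> hits (tp z) /\ ownw (tp z) = ownw z.
Proof.
move=> hz; case zI: (z \in I2).
  have [k [hk ek]] := tp_in zI.
  split; first by exists k; rewrite ek.
  by rewrite (ownw_fh hk) ek ownw_I2.
have [[|k] hk] := fh_exists hz; first by case: hk; rewrite /= zI.
rewrite tp_out ?zI //.
have hk' : fh sg I2 (sg z) k.
  case: hk => kI hj; split; first by rewrite -iterSr.
  by move=> j jk; rewrite -iterSr; apply: hj.
split; first by exists k; case: hk'.
by rewrite (ownw_fh hk) (ownw_fh hk') iterSr.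
Qed.


Lemma Hset_inl x : inH x \in Hset H. Proof. by rewrite inE. Qed.

Lemma tau_spec h : (tp (inH h) = inH (tu h)) \/ (tp (inH h) = iH /\ tp iH = inH (tu h)).
Proof.
rewrite /tau restrE ?Hset_inl //.
case E: (tp (inH h)) => [y|[]].
- left; rewrite (@firstin_fh _ _ _ _ _ 0 tp_inj) //= ?E //.
  by split; rewrite /= ?E ?inE.
- case E2: (tp iH) => [y|[]].
  + right; split => //.
    rewrite (@firstin_fh _ _ _ _ _ 1 tp_inj) //= ?E ?E2 //.
    split; first by rewrite /= E2 inE.
    by move=> [|j] // _; rewrite /= inE.
  + by have := E; rewrite -E2 => /tp_inj.
  + by move: (tp_inj (etrans E2 (esym tp_oh))); rewrite /ih /oh.
- by move: (tp_inj (etrans E (esym tp_oh))).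
Qed.

Lemma tau_inj : injective tu.
Proof.
move=> x y e.
case: (tau_spec x) => [ex|[ex1 ex2]]; case: (tau_spec y) => [ey|[ey1 ey2]].
- have: inH x = inH y by apply: tp_inj; rewrite ex ey e.
  by case.
- by have: inH x = iH by apply: tp_inj; rewrite ex ey2 e.
- by have: inH y = iH by apply: tp_inj; rewrite ey ex2 e.
- have: inH x = inH y by apply: tp_inj; rewrite ex1 ey1.
  by case.
Qed.

Definition own x := ownw (inH x).

Section Hits.
Hypothesis hitsH : forall x, hits (inH x).

Lemma own_tau x : own (tu x) = own x.
Proof.
rewrite /own; case: (tau_spec x) => [<-|[e1 <-]]; first by case: (tp_hits (hitsH x)).
have [h1 o1] := tp_hits (hitsH x); rewrite e1 in h1 o1.
by case: (tp_hits h1) => _ ->.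
Qed.

Lemma own_iter n x : own (iter n tu x) = own x.
Proof. by elim: n => //= n <-; rewrite own_tau. Qed.

Lemma own_conn x y : fconnect tu x y -> own x = own y.
Proof. by move/iter_findex <-; rewrite own_iter. Qed.

Lemma own_I x : x \in I -> own x = inH x.
Proof. by move=> xI; rewrite /own ownw_I2 ?inI2. Qed.

Lemma own_in x : own x \in I2.
Proof. exact: ownw_in. Qed.

Lemma walkL x j v : (forall i, i < j -> iter i sg (inH x) \notin I2) ->
  iter j sg (inH x) = inH v -> v = iter j tu x.
Proof.
elim: j v => [|j IH] v hj /=; first by case.
case E: (iter j sg (inH x)) => [u|[]].
- have u_n : inH u \notin I2 by rewrite -E; apply: hj.
  rewrite -(tp_out u_n) => ev.
  have := IH u (fun i ii => hj i (ltnW ii)) E => eu; rewrite -eu.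
  case: (tau_spec u) => [|[e1 _]]; first by rewrite ev => -[].
  by rewrite ev in e1.
- by have := hj j (ltnSn j); rewrite E ih_I2.
- by have := iter_sg_noh x j; rewrite E.
Qed.


Lemma own_inl x g : own x = inH g -> fconnect tu x g.
Proof.
have [k hk] := fh_exists (hitsH x); rewrite /own (ownw_fh hk) => e.
by rewrite (walkL (proj2 hk) e); apply: fconnect_iter.
Qed.

Lemma own_ih x : own x = iH -> exists u, [/\ sigma u = r, u \notin I & fconnect tu x u].
Proof.
have [[|k] hk] := fh_exists (hitsH x); rewrite /own (ownw_fh hk) //= => e.
have hj := proj2 hk.
case E: (iter k sg (inH x)) e => [u|[]] e.
- have un : inH u \notin I2 by rewrite -E; apply: hj.
  exists u; split.
  + by move: e; rewrite sgE; case: ifP => // /eqP.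
  + by rewrite -inI2.
  + by rewrite (walkL (fun i ii => hj i (ltnW ii)) E); apply: fconnect_iter.
- by have := hj k (ltnSn k); rewrite E ih_I2.
- by have := iter_sg_noh x k; rewrite E.
Qed.

Lemma own_conv x y : own x = own y -> fconnect tu x y.
Proof.
move=> exy; have := own_in x; case E: (own x) => [g|[]] _.
- apply: connect_trans (own_inl E) _.
  by rewrite fconnect_sym; [apply: own_inl; rewrite -exy | exact: tau_inj].
- have [u1 [s1 _ c1]] := own_ih E.
  have [u2 [s2 _ c2]] := own_ih (etrans (esym exy) E).
  have e12 : u1 = u2 by apply: (perm_inj (s := sigma)); rewrite s1 s2.
  apply: connect_trans c1 _; rewrite fconnect_sym ?e12 //; exact: tau_inj.
- by have := own_in x; rewrite E inE.
Qed.

Lemma fconn_succ g x : fconnect tu g x -> exists m, x = iter m.+1 tu g.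
Proof.
move/iter_findex => <-; case: findex => [|n]; last by exists n.
exists (order tu g).-1; rewrite orderSpred iter_order //; exact: tau_inj.
Qed.

Hypothesis alpha_inv : involutive alpha.
Hypothesis orient : alpha @: I = ~: I.

Lemma alpha_notI h : h \in I -> alpha h \notin I.
Proof.
move=> hI; have : alpha h \in alpha @: I by apply: imset_f.
by rewrite orient inE.
Qed.

Lemma notI_alpha x : x \notin I -> alpha x \in I.
Proof.
move=> xn; have : x \in ~: I by rewrite inE.
by rewrite -orient => /imsetP [h hI ->]; rewrite alpha_inv.
Qed.

Definition parf (z : HH H) : HH H := if z is inl h then own (alpha h) else z.

Local Notation ph := (tu \o alpha).

Definition Qg g := fconnect ph (alpha g) (tu (alpha g)) /\
  forall x, own x = inH g -> fconnect ph (alpha g) x.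

Lemma Qstep g : g \in I -> (forall c, c \in I -> parf (inH c) = inH g -> Qg c) -> Qg g.
Proof.
move=> gI hc.
have b0 : fconnect ph (alpha g) (tu g).
  have -> : tu g = ph (alpha g) by rewrite /= alpha_inv.
  exact: fconnect1.
have st : forall k, fconnect ph (alpha g) (iter k.+1 tu g).
  elim=> [|k IH] //.
  set y := iter k.+1 tu g in IH *.
  have oy : own y = inH g by rewrite /y own_iter own_I.
  case: (eqVneq y g) => [yg|yng]; first by rewrite iterS -/y yg.
  have yn : y \notin I.
    by apply/negP => yI; move: oy; rewrite own_I // => -[]; apply/eqP.
  have cI := notI_alpha yn.
  have pc : parf (inH (alpha y)) = inH g by rewrite /= alpha_inv.
  have [q1 _] := hc _ cI pc; rewrite alpha_inv in q1.
  exact: connect_trans IH q1.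
have all : forall x, own x = inH g -> fconnect ph (alpha g) x.
  move=> x ox; have := own_conv (etrans (own_I gI) (esym ox)).
  by case/fconn_succ => m ->.
split => //; apply: connect_trans (all g (own_I gI)) _; exact: fconnect1.
Qed.

Hypothesis goodI : forall g, g \in I -> exists n, iter n parf (inH g) = iH.

Lemma parf_ih n m z : iter n parf z = iH -> iter (m + n) parf z = iH.
Proof. by move=> e; elim: m => //= m ->. Qed.

Lemma unif : exists M, forall g, g \in I -> iter M parf (inH g) = iH.
Proof.
suff: forall s : seq H, exists M, forall g, g \in s -> g \in I -> iter M parf (inH g) = iH.
  by case/(_ (enum I)) => M hM; exists M => g gI; apply: hM; rewrite ?mem_enum.
elim => [|a s [M hM]]; first by exists 0.
case aI: (a \in I).
- have [n hn] := goodI aI; exists (M + n) => g; rewrite inE => /orP [/eqP -> _|gs gI].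
  + exact: parf_ih.
  + by rewrite addnC; apply: parf_ih; apply: hM.
- exists M => g; rewrite inE => /orP [/eqP -> |gs gI]; first by rewrite aI.
  exact: hM.
Qed.

Lemma Qall g : g \in I -> Qg g.
Proof.
have [M hM] := unif.
suff C : forall k g m, g \in I -> M <= k + m -> iter m parf (inH g) != iH -> Qg g.
  by move=> gI; apply: (C M g 0); rewrite ?addn0 //.
elim=> [|k IH] g' m gI le ne.
  by move: ne; rewrite add0n in le; rewrite -(subnK le) (parf_ih _ (hM _ gI)) eqxx.
apply: Qstep => // c cI pc; apply: (IH c m.+1) => //; first by rewrite addnS.
by rewrite iterSr pc.
Qed.

Variable c0 : H.
Hypothesis hc0 : own c0 = iH.

Lemma rootR k : fconnect ph c0 (iter k tu c0).
Proof.
elim: k => [|k IH] //=.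
set y := iter k tu c0 in IH *.
have oy : own y = iH by rewrite /y own_iter.
have yn : y \notin I by apply/negP => yI; move: oy; rewrite own_I.
have cI := notI_alpha yn.
have [q1 _] := Qall cI; rewrite alpha_inv in q1.
exact: connect_trans IH q1.
Qed.

Lemma reach_ih x : own x = iH -> fconnect ph c0 x.
Proof.
by move=> ox; move: (own_conv (etrans hc0 (esym ox))) => /iter_findex <-; apply: rootR.
Qed.

Lemma reach_all x : fconnect ph c0 x.
Proof.
suff L : forall m g, g \in I -> iter m parf (inH g) = iH ->
    forall x, own x = inH g -> fconnect ph c0 x.
  have := own_in x; case E: (own x) => [g|[]].
  - rewrite inI2 => gI; have [n hn] := goodI gI; exact: (L n g gI hn).
  - by move=> _; apply: (reach_ih E).
  - by rewrite inE.
elim=> [|m IH] g gI e; first by move: e; rewrite /ih.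
have ag : fconnect ph c0 (alpha g).
  move: e; rewrite iterSr /=.
  have := own_in (alpha g); case E: (own (alpha g)) => [g'|[]] //=.
  + by rewrite inI2 => g'I e; apply: (IH g' g'I e).
  + by move=> _ _; apply: reach_ih.
  + by move=> _; rewrite iter_fix.
by move=> z oz; apply: connect_trans ag ((Qall gI).2 z oz).
Qed.

End Hits.

Lemma walk_sigma q : forall y, (forall p, p < q.+1 -> iter p sigma y \notin I) ->
  (iter q.+1 sigma y \in I \/ iter q.+1 sigma y = r) ->
  exists k, fh sg I2 (inH y) k /\ (iter k sg (inH y) = iH \/
    (iter k sg (inH y) = inH (iter q.+1 sigma y) /\ iter q.+1 sigma y != r)).
Proof.
elim: q => [|q IH] y hp hend; have yn : y \notin I := hp 0 (ltn0Sn _).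
- case E: (sigma y == r).
  + exists 1; split; last by left; rewrite /= ?sgE E.
    split; first by rewrite /= ?sgE E ih_I2.
    by move=> [|j] // _; rewrite /= inI2.
  + have syI : sigma y \in I.
      by case: hend => // /eqP; rewrite /= E.
    exists 1; split; last by right; rewrite /= ?sgE E.
    split; first by rewrite /= ?sgE E inI2.
    by move=> [|j] // _; rewrite /= inI2.
- case E: (sigma y == r).
  + exists 1; split; last by left; rewrite /= ?sgE E.
    split; first by rewrite /= ?sgE E ih_I2.
    by move=> [|j] // _; rewrite /= inI2.
  + have hp' : forall p, p < q.+1 -> iter p sigma (sigma y) \notin I.
      by move=> p pq; rewrite -iterSr; apply: hp.
    have hend' : iter q.+1 sigma (sigma y) \in I \/ iter q.+1 sigma (sigma y) = r.
      by rewrite -iterSr.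
    have [k [[kI hj] res]] := IH (sigma y) hp' hend'.
    have e1 : forall n, iter n.+1 sg (inH y) = iter n sg (inH (sigma y)).
      by move=> n; rewrite iterSr sgE E.
    exists k.+1; split.
      split; first by rewrite e1.
      by move=> [|j] jk; rewrite ?e1 /= ?inI2 //; apply: hj.
    by rewrite e1 [iter q.+2 sigma y]iterSr.
Qed.

Lemma step_fh prev h : left_step sigma alpha I prev h -> (prev = r \/ prev \in I) ->
  exists k, fh sg I2 (inH (alpha h)) k /\ (iter k sg (inH (alpha h)) = iH \/
    (iter k sg (inH (alpha h)) = inH prev /\ prev \in I /\ prev != r)).
Proof.
move=> [hI [[|q] [q0 eprev hp]]] pc //.
have hp' : forall p, p < q.+1 -> iter p sigma (alpha h) \notin I.
  by move=> p pq; have := hp p pq; rewrite inE.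
have he : iter q.+1 sigma (alpha h) \in I \/ iter q.+1 sigma (alpha h) = r.
  by rewrite -eprev; case: pc; [right|left].
have [k [hk res]] := @walk_sigma q (alpha h) hp' he.
- exists k; split => //; case: res => [|[e ne]]; [by left|right].
  rewrite -eprev in e ne *; split => //; split => //.
  by case: hk => kI _; rewrite e inI2 in kI.
Qed.

Lemma lp_good l : forall prev, left_path sigma alpha I prev l ->
  (prev = r \/ (prev \in I /\ exists n, iter n parf (inH prev) = iH)) ->
  forall h, h \in l -> hits (inH (alpha h)) /\ exists n, iter n parf (inH h) = iH.
Proof.
elim: l => [|h l IH] prev //= [st pl] pc.
have [k [hk res]] := step_fh st (ltac:(by case: pc => [|[]]; [left|right])).
have hh : hits (inH (alpha h)) by exists k; case: hk.
have gh : exists n, iter n parf (inH h) = iH.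
  case: res => [e|[e [pI pr]]].
    by exists 1; rewrite /= /own (ownw_fh hk) e.
  case: pc => [pr'|[_ [n hn]]]; first by rewrite pr' eqxx in pr.
  by exists n.+1; rewrite iterSr /= /own (ownw_fh hk) e.
move=> h'; rewrite inE => /orP [/eqP -> //|h'l].
apply: (IH h) => //; right; split => //; exact: st.1.
Qed.

Lemma iter_inv (ai : involutive alpha) n x : iter n alpha x = x \/ iter n alpha x = alpha x.
Proof.
elim: n => [|n [IH|IH]] /=; [by left|by rewrite IH; right|by rewrite IH ai; left].
Qed.

Lemma main_spec : is_map sigma alpha -> orientation alpha I ->
  left_connected sigma alpha I r ->
  plane_tree tu alpha /\
  (forall x : H, ~~ fconnect tu (unfold_root sigma I r) x ->
      #|[set y | fconnect tu x y & y \in I]| = 1%N).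
Proof.
case=> [sinj ainv afp trans] or lc.
have nIa := notI_alpha ainv or.
have aIn := alpha_notI or.
have inl_l : forall (l : seq H) , l != [::] -> last r l \in l.
  by move=> [|a l] // _; rewrite /= mem_last.
have lcp : forall h, h \in I -> hits (inH (alpha h)) /\ exists n, iter n parf (inH h) = iH.
  move=> h hI; have [l [ln lp lh]] := lc h hI.
  by apply: (lp_good lp); [left | rewrite -lh; apply: inl_l].
have hitsH : forall x, hits (inH x).
  move=> x; case xI: (x \in I); first by exists 0; rewrite /= inI2.
  by have := (lcp _ (nIa x (negbT xI))).1; rewrite ainv.
have goodI : forall g, g \in I -> exists n, iter n parf (inH g) = iH.
  by move=> g /lcp [].
have [h0 h0I] : exists h0, h0 \in I.
  case rI: (r \in I); first by exists r.
  by exists (alpha r); apply: nIa; rewrite rI.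
have [c0 hc0] : exists c0, own c0 = iH.
  have [[|h1 l] [ln lp _]] := lc h0 h0I => //.
  case: lp => st _.
  have [k [hk res]] := step_fh st (or_introl erefl).
  exists (alpha h1); rewrite /own (ownw_fh hk).
  by case: res => // -[_ [_ /eqP]].
have phinj : injective (tu \o alpha) := inj_comp (@tau_inj) (@perm_inj _ alpha).
have reach := reach_all hitsH ainv or goodI hc0.
have c0n : c0 \notin I by apply/negP => cI; move: hc0; rewrite own_I.
have nv : ncycles tu = #|I|.+1.
  have -> : #|I|.+1 = #|c0 |: I| by rewrite cardsU1 c0n.
  apply: ncomp_reps; first exact: tau_inj.
  - move=> x; have := own_in hitsH x; case E: (own x) => [g|[]].
    + rewrite inI2 => gI; exists g; first by rewrite !inE gI orbT.
      have := @own_inl hitsH x g E. exact.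
    + move=> _; exists c0; first by rewrite !inE eqxx.
      by apply: (@own_conv hitsH x c0); rewrite E hc0.
    + by rewrite inE.
  - move=> r1 r2; rewrite !inE => /orP [/eqP ->|r1I] /orP [/eqP ->|r2I] //.
    + by move/(own_conn hitsH); rewrite hc0 own_I.
    + by move/(own_conn hitsH); rewrite hc0 own_I.
    + by move/(own_conn hitsH); rewrite !own_I // => -[].
have ne : ncycles alpha = #|I|.
  apply: ncomp_reps; first exact: perm_inj.
  - move=> x; case xI: (x \in I); first by exists x.
    exists (alpha x); [by apply: nIa; rewrite xI | exact: fconnect1].
  - move=> r1 r2 r1I r2I c; have e := iter_findex c.
    case: (@iter_inv ainv (findex alpha r1 r2) r1) => e'; rewrite e' in e => //.
    by move: r2I; rewrite -e (negbTE (aIn r1 r1I)).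
have nf : ncycles (tu \o alpha) = 1%N.
  rewrite -(cards1 c0); apply: ncomp_reps => //.
    by move=> x; exists c0; rewrite ?inE // fconnect_sym.
  by move=> r1 r2; rewrite !inE => /eqP -> /eqP ->.
split.
  split; last first.
  - rewrite /euler_char /nvertices /nedges /nfaces nv ne nf -addn1 PoszD.
    by rewrite -[(_ + 1 - _)%R]addrAC subrr add0r.
  - exact: nf.
  split => //; first exact: tau_inj.
  move=> x y.
  have xy : fconnect (tu \o alpha) x y.
    by apply: connect_trans (reach y); rewrite fconnect_sym.
  apply: connect_sub xy => u v /eqP <-.
  apply: (@connect_trans _ _ (alpha u)); apply: connect1; by rewrite eqxx ?orbT.
have [y0 [ey0 oy0]] : exists y0, tp iH = inH y0 /\ own y0 = iH.
  have ht : hits iH by exists 0; rewrite /= ih_I2.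
  case E: (tp iH) => [y|[]].
  - exists y; split => //; by rewrite /own -E (tp_hits ht).2 ownw_I2 // ih_I2.
  - have [u [su un _]] := own_ih hitsH hc0.
    have e : tp (inH u) = iH.
      rewrite tp_out ?inI2 //; rewrite /= su eqxx //.
    by move: (tp_inj (etrans e (esym E))).
  - by move: (tp_inj (etrans E (esym tp_oh))).
have -> : unfold_root sigma I r = y0 by rewrite /unfold_root ey0.
move=> x nc.
have := own_in hitsH x; case E: (own x) => [g|[]].
- rewrite inI2 => gI.
  suff -> : [set y | fconnect tu x y & y \in I] = [set g] by rewrite cards1.
  apply/setP => y; rewrite !inE; apply/andP/eqP.
  + case=> /(own_conn hitsH) e yI; move: e; rewrite E (own_I yI); by case.
  + by move=> ->; split => //; apply: (@own_inl hitsH x g E).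
- move=> _; case/negP: nc; apply: (@own_conv hitsH y0 x); rewrite E oy0 //.
- by rewrite inE.
Qed.

End Spec.

Theorem mainTheorem11 (H : finType) (sigma alpha : {perm H}) (r : H)
    (I : {set H}) :
  is_map sigma alpha ->
  orientation alpha I ->
  left_connected sigma alpha I r ->
  plane_tree (tau sigma I r) alpha /\
  (forall x : H,
      ~~ fconnect (tau sigma I r) (unfold_root sigma I r) x ->
      #|[set y | fconnect (tau sigma I r) x y & y \in I]| = 1%N).
Proof. exact: main_spec. Qed.
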